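(* Let $A$ be a finite alphabet, $E\subseteq W(A)$ and $\vec s\in V^\infty(A)$ such that $E$ is large in $\vec s$. Let $r\ge 2$ and $E=\bigcup_{i=1}^r E_i$. Then there exist $1\le i\le r$ and $\vec t\in V^\infty(A)$ with $\vec t\le\vec s$ such that $E_i$ is large in $\vec t$.
   Context: $\mathbb N=\{0,1,2,\dots\}$. Let $A$ be a finite nonempty alphabet. $W(A)$ denotes the set of all finite words over $A$, including the empty word; words are concatenated by juxtaposition. Fix a symbol $x\notin A$. A variable word over $A$ is a finite word over $A\cup\{x\}$ in which $x$ occurs at least once; $V(A)$ is the set of variable words. For $s(x)\in V(A)$ and $a\in A\cup\{x\}$, $s(a)$ is obtained by replacing every occurrence of $x$ by $a$. $V^\infty(A)$ is the set of infinite sequences of variable words. For a sequence $(s_n(x))_{n\in I}$ of variable words indexed by a set $I\subseteq\mathbb N$ that is either a finite interval or of the form $\{m,m+1,\dots\}$: the constant span $\langle (s_n(x))_{n\in I}\rangle_c$ is the set of all words $s_{l_0}(a_0)s_{l_1}(a_1)\cdots s_{l_j}(a_j)$ with $j\ge 0$, $l_0<\dots<l_j$ in $I$ and $a_0,\dots,a_j\in A$; the variable span $\langle (s_n(x))_{n\in I}\rangle_v$ is the set of all words $s_{l_0}(a_0)\cdots s_{l_j}(a_j)$ with $j\ge0$, $l_0<\dots<l_j$ in $I$, $a_0,\dots,a_j\in A\cup\{x\}$ and at least one $a_i=x$. Extracted subsequences: let $\vec s=(s_n(x))_{n=0}^\infty\in V^\infty(A)$. A finite sequence $(t_n(x))_{n=0}^l$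 of variable words is an extracted subsequence of $\vec s$ if there exist integers $0=m_0<m_1<\dots<m_{l+1}$ with $t_i(x)\in\langle (s_n(x))_{n=m_i}^{m_{i+1}-1}\rangle_v$ for all $0\le i\le l$. An infinite sequence $\vec t=(t_n(x))_{n=0}^\infty$ is an extracted subsequence of $\vec s$ if every initial segment $(t_n(x))_{n=0}^l$ is a finite extracted subsequence of $\vec s$. We write $\vec t\le\vec s$. A set $E\subseteq W(A)$ is large in $\vec s\in V^\infty(A)$ if $E\cap\langle\vec w\rangle_c\neq\emptyset$ for every infinite extracted subsequence $\vec w$ of $\vec s$. *)

(* Defs.v *)
From mathcomp Require Import all_boot.
Set Implicit Arguments. Unset Strict Implicit. Unset Printing Implicit Defensive.

(* Letters of A ∪ {x}: [Some a] is the letter a, [None] is the variable x. *)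
Section Words.
Variable A : finType.

(* W(A) = seq A ; words over A ∪ {x} = seq (option A). *)
Definition is_vword (s : seq (option A)) : bool := None \in s.

(* Infinite sequences of words over A ∪ {x}; V^∞(A) is the subset of those
   whose terms are all variable words. *)
Definition vseq := nat -> seq (option A).
Definition is_vseq (s : vseq) : Prop := forall n, is_vword (s n).

Definition subst (s : seq (option A)) (b : option A) : seq (option A) :=
  map (fun c => if c is Some a then Some a else b) s.
Definition substA (s : seq (option A)) (a : A) : seq A :=
  map (fun c => odflt a c) s.

Definition in_vspan (s : vseq) (m n : nat) (w : seq (option A)) : Prop :=
  exists (ls : seq nat) (bs : seq (option A)),
    [/\ size ls = size bs, 0 < size ls, sorted ltn ls,
        all (fun l => m <= l < n) ls & None \in bs] /\
        w = flatten [seq subst (s p.1) p.2 | p <- zip ls bs].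

Definition in_cspan (s : vseq) (w : seq A) : Prop :=
  exists (ls : seq nat) (as_ : seq A),
    [/\ size ls = size as_, 0 < size ls, sorted ltn ls &
        w = flatten [seq substA (s p.1) p.2 | p <- zip ls as_]].

Definition extracted_fin (t s : vseq) (l : nat) : Prop :=
  exists m : nat -> nat,
    [/\ m 0 = 0,
        (forall i, i <= l -> m i < m i.+1) &
        (forall i, i <= l -> in_vspan s (m i) (m i.+1) (t i))].

Definition extracted (t s : vseq) : Prop := forall l, extracted_fin t s l.

Definition large (E : seq A -> Prop) (s : vseq) : Prop :=
  forall w : vseq, is_vseq w -> extracted w s ->
    exists u, E u /\ in_cspan w u.
End Words.

(* Main.v *)
Require Import Defs.
From mathcomp Require Import all_boot.
From Stdlib Require Classical ClassicalEpsilon.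
Local Notation NNPP := Classical_Prop.NNPP.
Local Notation constructive_indefinite_description := ClassicalEpsilon.constructive_indefinite_description.
Set Implicit Arguments. Unset Strict Implicit. Unset Printing Implicit Defensive.

Section Aux.
Variable A : finType.

Definition ev (s : vseq A) (ps : seq (nat * option A)) : seq (option A) :=
  flatten [seq subst (s p.1) p.2 | p <- ps].

Definition cb (c b : option A) : option A := if c is Some a then Some a else b.

Lemma ev_cat s p1 p2 : ev s (p1 ++ p2) = ev s p1 ++ ev s p2.
Proof. by rewrite /ev map_cat flatten_cat. Qed.

Lemma subst_ev s qs b :
  subst (ev s qs) b = ev s [seq (q.1, cb q.2 b) | q <- qs].
Proof.
elim: qs => [//|q qs IH] /=.
have -> : ev s (q :: qs) = subst (s q.1) q.2 ++ ev s qs by [].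
rewrite {1}/subst map_cat -/(subst (ev s qs) b) IH; congr (_ ++ _).
rewrite /subst -map_comp; apply: eq_map => c /=; by case: c; case: (q.2).
Qed.

Lemma choice_fun (X Y : Type) (P : X -> Y -> Prop) :
  (forall x, exists y, P x y) -> exists f, forall x, P x (f x).
Proof.
move=> H; exists (fun x => proj1_sig (constructive_indefinite_description _ (H x))).
move=> x; exact: proj2_sig.
Qed.

Lemma vspanE s m n w : in_vspan s m n w <->
  exists ps, [/\ ps != [::], sorted ltn (map fst ps),
     all (fun p => m <= p.1 < n) ps, None \in map snd ps & w = ev s ps].
Proof.
split.
- move=> [ls [bs [[Hsz Hpos Hso Hall Hn] ->]]].
  exists (zip ls bs).
  have E1 : map fst (zip ls bs) = ls by rewrite -/(unzip1 _) unzip1_zip // Hsz.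
  have E2 : map snd (zip ls bs) = bs by rewrite -/(unzip2 _) unzip2_zip // Hsz.
  split => //.
  + by rewrite -size_eq0 size_zip -Hsz minnn -lt0n.
  + by rewrite E1.
  + by move: Hall; rewrite -{1}E1 all_map; apply.
  + by rewrite E2.
- move=> [ps [Hne Hso Hall Hn ->]].
  exists (map fst ps), (map snd ps); split; last by rewrite zip_unzip.
  split => //.
  + by rewrite !size_map.
  + by rewrite size_map; case: ps Hne {Hso Hall Hn}.
  + by rewrite all_map.
Qed.

Lemma cspanE s u : in_cspan s u <->
  exists ps, [/\ ps != [::], sorted ltn (map fst ps),
     all (fun p => p.2 != None) ps & map Some u = ev s ps].
Proof.
split.
- move=> [ls [as_ [Hsz Hpos Hso ->]]].
  exists (zip ls (map Some as_)).
  have E1 : map fst (zip ls (map Some as_)) = ls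
    by rewrite -/(unzip1 _) unzip1_zip // size_map Hsz.
  split.
  + by rewrite -size_eq0 size_zip size_map -Hsz minnn -lt0n.
  + by rewrite E1.
  + elim: ls as_ {Hsz Hpos Hso E1} => [|l ls IH] [|a as_] //=.
  + elim: ls as_ Hsz {Hpos Hso E1} => [|l ls IH] [|a as_] //= [] Hsz.
    rewrite map_cat /ev /= -/(ev _ _) -IH //; congr (_ ++ _).
    rewrite /substA /subst -map_comp; apply: eq_map => c; by case: c.
- move=> [ps [Hne Hso Hall Hev]].
  case: ps Hne Hso Hall Hev => [//|p0 ps] _ Hso Hall Hev.
  have [a0 _] : exists a0 : A, True.
    move: Hall => /= /andP [] ; case: (p0.2) => [a|//] _ _; by exists a.
  set ps' := p0 :: ps in Hso Hall Hev.
  exists (map fst ps'), (map (fun p => odflt a0 p.2) ps'); split => //.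
  + by rewrite !size_map.
  apply: (@inj_map _ _ Some); first by move=> x y [].
  rewrite Hev; elim: ps' Hall {Hso Hev} => [//|p qs IH] /= /andP [Hp Hq].
  rewrite map_cat /ev /= -/(ev _ _) IH //; congr (_ ++ _).
  rewrite /substA /subst -map_comp; apply: eq_map => c.
  by case: c => //=; case: (p.2) Hp.
Qed.

Lemma mono (m : nat -> nat) K : (forall i, i <= K -> m i < m i.+1) ->
  forall i j, i < j -> j <= K.+1 -> m i < m j.
Proof.
move=> Hm i; elim => [//|j IH] Hij Hj.
rewrite leq_eqVlt in Hij; case/orP: Hij => [/eqP [->]|Hij].
  by apply: Hm.
apply: ltn_trans (IH Hij (ltnW Hj)) (Hm _ _); done.
Qed.

Lemma monoW (m : nat -> nat) K : (forall i, i <= K -> m i < m i.+1) ->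
  forall i j, i <= j -> j <= K.+1 -> m i <= m j.
Proof.
move=> Hm i j; rewrite leq_eqVlt => /orP [/eqP -> //|Hij] Hj.
exact: ltnW (mono Hm Hij Hj).
Qed.

Section Comb.
Variables (s t : vseq A) (qs : nat -> seq (nat * option A)) (m : nat -> nat) (K : nat).

Definition comb ps := flatten [seq [seq (q.1, cb q.2 p.2) | q <- qs p.1] | p <- ps].

Lemma ev_comb ps : (forall p, p < K -> t p = ev s (qs p)) ->
  all (fun p => p.1 < K) ps -> ev t ps = ev s (comb ps).
Proof.
move=> Ht; elim: ps => [//|p ps IH] /= /andP [Hp Hps].
rewrite /comb /= ev_cat -/(comb _) -IH // -subst_ev -Ht //.
Qed.

Lemma None_cb (l : seq (nat * option A)) b :
  (None \in map snd [seq (q.1, cb q.2 b) | q <- l]) = (b == None) && (None \in map snd l).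
Proof.
elim: l => [|q l IH] /=; first by rewrite andbF.
rewrite !in_cons IH; case: (q.2) => [a|]; case: b IH => [b|] IH /=; rewrite ?orbF //.
Qed.

Lemma comb_None ps : (None \in map snd (comb ps)) =
  has (fun p => (p.2 == None) && (None \in map snd (qs p.1))) ps.
Proof.
elim: ps => [//|p ps IH] /=.
by rewrite /comb /= map_cat mem_cat -/(comb _) IH None_cb.
Qed.

Lemma comb_sorted ps a b :
  (forall p, p < K -> sorted ltn (map fst (qs p)) /\
                      all (fun q => m p <= q.1 < m p.+1) (qs p)) ->
  (forall i j, i <= j -> j <= K -> m i <= m j) ->
  sorted ltn (map fst ps) -> all (fun p => a <= p.1 < b) ps -> b <= K ->
  sorted ltn (map fst (comb ps)) /\ all (fun q => m a <= q.1 < m b) (comb ps).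
Proof.
move=> Hq Hmo; elim: ps a => [//|p ps IH] a /= Hso /andP [/andP [Hap Hpb] Hall] HbK.
rewrite /comb /= -/(comb _).
move: Hso; rewrite (path_sortedE ltn_trans) => /andP [Hgt Hso].
have Hall' : all (fun p' => p.1.+1 <= p'.1 < b) ps.
  apply/allP => p' Hp'; move/allP: Hall => /(_ p' Hp') /andP [_ ->].
  by move/allP: Hgt => /(_ p'.1 (map_f _ Hp')) ->.
have [IH1 IH2] := IH _ Hso Hall' HbK.
have [Hq1 Hq2] := Hq p.1 (leq_trans Hpb HbK).
have EH : map fst [seq (q.1, cb q.2 p.2) | q <- qs p.1] = map fst (qs p.1)
  by rewrite -map_comp.
have HmK := Hmo p.1.+1 b Hpb HbK.
split.
- rewrite map_cat sorted_pairwise //; last exact: ltn_trans.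
  rewrite pairwise_cat -!sorted_pairwise; try exact: ltn_trans.
  rewrite EH Hq1 IH1 !andbT.
  apply/allrelP => x y /mapP [q Hq0 ->] /mapP [q' Hq' ->].
  move/allP: Hq2 => /(_ q Hq0) /andP [_ H1].
  move/allP: IH2 => /(_ q' Hq') /andP [H2 _].
  exact: leq_trans H1 H2.
- rewrite all_cat; apply/andP; split.
  + rewrite all_map; apply/allP => q Hqq /=.
    move/allP: Hq2 => /(_ q Hqq) /andP [H1 H2].
    rewrite (leq_trans (Hmo a p.1 Hap (ltnW (leq_trans Hpb HbK))) H1) /=.
    exact: leq_trans H2 HmK.
  + apply/allP => q Hqq; move/allP: IH2 => /(_ q Hqq) /andP [H1 ->].
    rewrite andbT; apply: leq_trans H1.
    apply: Hmo; [exact: leq_trans Hap (leqnSn _) | exact: leq_trans Hpb HbK].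
Qed.

End Comb.

Lemma ext_refl (s : vseq A) : is_vseq s -> extracted s s.
Proof.
move=> Hs l; exists id; split => // i _.
apply/vspanE; exists [:: (i, None)]; split => //=.
- by rewrite leqnn ltnSn.
- rewrite /ev /= cats0 /subst -[LHS]map_id; apply: eq_map => c; by case: c.
Qed.

Lemma ext_trans (w t s : vseq A) : extracted w t -> extracted t s -> extracted w s.
Proof.
move=> Hwt Hts l.
have [m [Hm0 Hm Hwv]] := Hwt l.
set L := (m l.+1).-1.
have Hpos : 0 < m l.+1 by rewrite -Hm0; apply: (mono Hm).
have HK : L.+1 = m l.+1 by rewrite /L prednK.
have [m' [Hm'0 Hm' Htv]] := Hts L.
have HP : forall p, exists q, p <= L ->
   [/\ q != [::], sorted ltn (map fst q),
     all (fun r => m' p <= r.1 < m' p.+1) q, None \in map snd q & t p = ev s q].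
  move=> p; case: (leqP p L) => Hp.
    by have /vspanE [q Hq] := Htv p Hp; exists q.
  by exists [::].
have [qs Hqs] := choice_fun HP.
exists (fun i => m' (m i)); split.
- by rewrite Hm0.
- move=> i Hi; apply: (mono Hm'); first exact: Hm.
  by rewrite HK; apply: monoW Hm _ _ _ _.
- move=> i Hi; have /vspanE [ps [Hne Hso Hall Hn ->]] := Hwv i Hi.
  have HiK : m i.+1 <= L.+1 by rewrite HK; apply: monoW Hm _ _ _ _.
  apply/vspanE; exists (comb qs ps).
  have Hlt : all (fun p => p.1 < L.+1) ps.
    apply/allP => p Hp; move/allP: Hall => /(_ p Hp) /andP [_ H].
    exact: leq_trans H HiK.
  have [S1 S2] := @comb_sorted qs m' L.+1 ps (m i) (m i.+1)
     (fun p Hp => let: And5 _ a b _ _ := Hqs p Hp in conj a b)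
     (fun i j a b => monoW Hm' a b) Hso Hall HiK.
  split => //.
  + case: ps Hne Hall {Hso Hn S1 S2 Hlt} => [//|p ps] _ /= /andP [/andP [_ H] _].
    have Hp : p.1 <= L by rewrite -ltnS; exact: leq_trans H HiK.
    have [Hq0 _ _ _ _] := Hqs p.1 Hp.
    rewrite /comb /=; by case: (qs p.1) Hq0.
  + rewrite comb_None; case/mapP: Hn => p Hp Hpn; apply/hasP; exists p => //.
    rewrite -Hpn eqxx /=.
    move/allP: Hlt => /(_ p Hp) Hp'; by case: (Hqs p.1 Hp').
  + apply: ev_comb; last exact: Hlt.
    by move=> p Hp; case: (Hqs p Hp).
Qed.

Lemma maxfst_ge (ps : seq (nat * option A)) :
  all (fun p => p.1 <= foldr maxn 0 (map fst ps)) ps.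
Proof.
elim: ps => [//|p ps IH] /=; rewrite leq_maxl /=.
apply/allP => q Hq; move/allP: IH => /(_ q Hq) H.
exact: leq_trans H (leq_maxr _ _).
Qed.

Lemma cspan_ext (w t : vseq A) u : extracted w t -> in_cspan w u -> in_cspan t u.
Proof.
move=> Hwt /cspanE [ps [Hne Hso Hall Hev]].
set L := foldr maxn 0 (map fst ps).
have [m [Hm0 Hm Hwv]] := Hwt L.
have HP : forall p, exists q, p <= L ->
   [/\ q != [::], sorted ltn (map fst q),
     all (fun r => m p <= r.1 < m p.+1) q, None \in map snd q & w p = ev t q].
  move=> p; case: (leqP p L) => Hp.
    by have /vspanE [q Hq] := Hwv p Hp; exists q.
  by exists [::].
have [qs Hqs] := choice_fun HP.
apply/cspanE; exists (comb qs ps).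
have Hlt : all (fun p => 0 <= p.1 < L.+1) ps.
  apply/allP => p Hp; move/allP: (maxfst_ge ps) => /(_ p Hp) H; by rewrite ltnS.
have [S1 _] := @comb_sorted qs m L.+1 ps 0 L.+1
     (fun p Hp => let: And5 _ a b _ _ := Hqs p Hp in conj a b)
     (fun i j a b => monoW Hm a b) Hso Hlt (leqnn _).
split => //.
- have Hmax := maxfst_ge ps; rewrite -/L in Hmax.
  move: Hne Hmax; case Eps: ps => [//|p ps'] _ Hmax.
  have Hp : p.1 <= L by move/allP: Hmax => /(_ p (mem_head _ _)).
  have [Hq0 _ _ _ _] := Hqs p.1 Hp.
  rewrite /comb /=; by case: (qs p.1) Hq0.
- apply/allP => q Hq; apply/negP => /eqP Hqn.
  have : None \in map snd (comb qs ps) by apply/mapP; exists q.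
  rewrite comb_None => /hasP [p Hp /andP [/eqP Hpn _]].
  by move/allP: Hall => /(_ p Hp); rewrite Hpn.
- rewrite Hev; apply: (ev_comb (K:=L.+1)).
    by move=> p Hp; case: (Hqs p Hp).
  by apply/allP => p Hp; move/allP: Hlt => /(_ p Hp).
Qed.

Lemma not_large E (t : vseq A) : ~ large E t ->
  exists w, is_vseq w /\ extracted w t /\ forall u, E u -> ~ in_cspan w u.
Proof.
move=> H; apply: NNPP => H0; apply: H => w Hw Hx; apply: NNPP => no.
apply: H0; exists w; split => //; split => // u Eu Hc; apply: no; by exists u.
Qed.

End Aux.

Theorem fact2p5 (A : finType) (HA : 0 < #|A|) (E : seq A -> Prop) (s : vseq A)
    (Hs : is_vseq s) (HE : large E s) (r : nat) (Hr : 2 <= r)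
    (Es : 'I_r -> seq A -> Prop) (HEu : forall w, E w <-> exists i, Es i w) :
  exists (i : 'I_r) (t : vseq A), is_vseq t /\ extracted t s /\ large (Es i) t.
Proof.
apply: NNPP => Hn.
have Hn' : forall i t, is_vseq t -> extracted t s -> ~ large (Es i) t.
  by move=> i t Ht Hx Hl; apply: Hn; exists i, t.
have Hind : forall k, k <= r -> exists w, is_vseq w /\ extracted w s /\
    forall (i : 'I_r) u, i < k -> Es i u -> ~ in_cspan w u.
  elim => [_|k IH Hk].
    by exists s; split => //; split; [exact: ext_refl|].
  have [w [Hw [Hws Hwi]]] := IH (ltnW Hk).
  have [w' [Hw' [Hw'w Hno]]] := not_large (Hn' (Ordinal Hk) w Hw Hws).
  exists w'; split => //; split; first exact: ext_trans Hw'w Hws.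
  move=> i u; rewrite ltnS leq_eqVlt => /orP [/eqP Hik|Hik] Hu Hc.
    have Hi : i = Ordinal Hk by apply: val_inj.
    by rewrite Hi in Hu; apply: (Hno u Hu).
  by apply: (Hwi i u Hik Hu); apply: cspan_ext Hw'w Hc.
have [w [Hw [Hws Hwi]]] := Hind r (leqnn _).
have [u [Eu Hc]] := HE w Hw Hws.
have [i Hi] := (proj1 (HEu u)) Eu.
exact: (Hwi i u (ltn_ord i) Hi Hc).
Qed.
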